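(* Let $k\ge1$ and $x\ge0$ be integers, and let $a_1,a_2,\dots,a_{2^k+x}$ be (not necessarily distinct) integers. Then at least one of the following holds: (1) there is a subset $I\subseteq\{1,\dots,2^k+x\}$ such that $\sum_{i\in I}a_i$ is divisible by $2^k$ but not by $2^{k+1}$; (2) there exist $x+1$ pairwise disjoint non-empty sets $A_1,\dots,A_{x+1}\subseteq\{1,\dots,2^k+x\}$ such that $\sum_{i\in A_s}a_i\equiv 0\pmod{2^{k+1}}$ for every $s\le x+1$. *)

(* Defs.v *)
From mathcomp Require Import all_boot all_order all_algebra.
Set Implicit Arguments. Unset Strict Implicit. Unset Printing Implicit Defensive.
Import Order.TTheory GRing.Theory Num.Theory.

(* Main.v *)
Require Import Defs.
From mathcomp Require Import all_boot all_order all_algebra zify ring.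
Import Order.TTheory GRing.Theory Num.Theory.
Local Open Scope ring_scope.
Set Implicit Arguments. Unset Strict Implicit. Unset Printing Implicit Defensive.

Section Kneser.
Variable G : finZmodType.
Variable h : G.
Hypothesis Hh : forall g : G, g != 0 -> exists n, g *+ n = h.

Definition sumset (A B : {set G}) := [set a + b | a in A, b in B].

Lemma sumset0 (A : {set G}) : sumset A [set 0] = A.
Proof.
apply/setP=> z; apply/imset2P/idP.
  by case=> a b Ha; rewrite inE => /eqP -> ->; rewrite addr0.
by move=> Hz; exists z 0; rewrite ?inE ?addr0.
Qed.

Lemma Klemma n : forall A B : {set G}, (#|B| <= n)%N -> 0 \in A -> 0 \in B ->
  h \notin sumset A B -> (#|A| + #|B| <= #|sumset A B| + 1)%N.
Proof.
elim: n => [|n IH] A B HB A0 B0 Hns.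
  by move: HB; rewrite leqn0 cards_eq0 => /eqP BE; rewrite BE inE in B0.
have [Bsub|] := boolP (B \subset [set 0]).
  have BE : B = [set 0].
    by apply/eqP; rewrite eqEsubset Bsub sub1set B0.
  by rewrite BE sumset0 cards1 leqnn.
case/subsetPn=> b Bb; rewrite inE => bn0.
have [a [c [Aa [Bc Nac]]]] : exists a c, a \in A /\ c \in B /\ a + c \notin A.
  case: (boolP [exists a, (a \in A) && [exists c, (c \in B) && (a + c \notin A)]]).
    by case/existsP=> a /andP[Aa /existsP[c /andP[Bc Nac]]]; exists a, c.
  move=> Hall.
  have stab : forall y, y \in A -> y + b \in A.
    move=> y Ay; apply/negPn/negP => Hn; move/negP: Hall; apply.
    by apply/existsP; exists y; rewrite Ay /=; apply/existsP; exists b; rewrite Bb.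
  have mult : forall m, b *+ m \in A.
    by elim=> [|m IHm]; rewrite ?mulr0n // mulrS addrC; apply: stab.
  case: (Hh bn0) => m Hm; move/negP: Hns; case.
  by apply/imset2P; exists h 0; rewrite ?addr0 // -Hm mult.
pose A' := A :|: [set a + y | y in B].
pose B' := [set y in B | a + y \in A].
have A'0 : 0 \in A' by rewrite inE A0.
have B'0 : 0 \in B' by rewrite inE B0 addr0 Aa.
have B'sub : B' \proper B.
  apply/properP; split; first by apply/subsetP=> y; rewrite inE => /andP[].
  by exists c; rewrite // inE Bc /= (negbTE Nac).
have sub : sumset A' B' \subset sumset A B.
  apply/subsetP=> z /imset2P[u y Hu Hy ->].
  move: Hy; rewrite inE => /andP[By Ay].
  move: Hu; rewrite inE => /orP[Au|/imsetP[y0 By0 ->]].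
    by apply/imset2P; exists u y.
  by apply/imset2P; exists (a + y) y0; rewrite // addrAC.
have HB' : (#|B'| <= n)%N.
  by rewrite -ltnS; apply: leq_trans (proper_card B'sub) HB.
have Hns' : h \notin sumset A' B'.
  by apply/negP => H; move/negP: Hns; apply; apply: (subsetP sub).
have := IH A' B' HB' A'0 B'0 Hns'.
have cardA' : (#|A'| + #|B'| = #|A| + #|B|)%N.
  have ->: #|B'| = #|A :&: [set a + y | y in B]|.
    have -> : A :&: [set a + y | y in B] = [set a + y | y in B'].
      apply/setP=> z; rewrite !inE; apply/andP/imsetP.
        case=> Az /imsetP[y By Ez]; exists y => //.
        by rewrite inE By -Ez Az.
      by case=> y; rewrite inE => /andP[By Ay] ->; split=> //; apply/imsetP; exists y.
    by rewrite card_imset //; apply: addrI.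
  rewrite cardsU.
  have -> : #|[set a + y | y in B]| = #|B| by rewrite card_imset //; apply: addrI.
  rewrite subnK //.
  by rewrite (leq_trans (subset_leq_card (subsetIl _ _))) ?leq_addr.
rewrite cardA' => H; apply: leq_trans H _.
by rewrite leq_add2r subset_leq_card.
Qed.

End Kneser.
Section Chain.
Variable I : finType.
Variable G : finZmodType.
Variable f : I -> G.

Definition sig (V : {set I}) := \sum_(i in V) f i.

Lemma sig_setD (X Y : {set I}) : Y \subset X -> sig (X :\: Y) = sig X - sig Y.
Proof.
move=> YX; rewrite /sig [\sum_(i in X) _](big_setID Y) /=.
by rewrite (setIidPr YX) addrAC subrr add0r.
Qed.

Lemma sig_setU (V W : {set I}) : [disjoint V & W] -> sig (V :|: W) = sig V + sig W.
Proof.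
move=> dVW; rewrite /sig [LHS](big_setID V) /=.
have -> : (V :|: W) :&: V = V by apply/setIidPr/subsetUl.
have -> : (V :|: W) :\: V = W.
  apply/setP=> i; rewrite !inE; case Vi: (i \in V) => //=.
  by move/disjoint_setI0/setP: dVW => /(_ i); rewrite !inE Vi /= => <-.
by [].
Qed.

Lemma sig0 : sig set0 = 0.
Proof. by rewrite /sig big_set0. Qed.

Lemma chain n : forall X : {set I}, (#|X| <= n)%N ->
  exists C : {set G},
    [/\ 0 \in C,
        (forall c, c \in C -> exists Y : {set I}, Y \subset X /\ c = sig Y),
        (forall c c', c \in C -> c' \in C ->
            exists W : {set I}, W \subset X /\ (c - c' = sig W \/ c' - c = sig W)) &
        ((forall W : {set I}, W \subset X -> W != set0 -> sig W != 0) -> (#|X| < #|C|)%N)].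
Proof.
elim: n => [|n IH] X HX.
  move: HX; rewrite leqn0 cards_eq0 => /eqP ->.
  exists [set 0]; split.
  - by rewrite inE.
  - by move=> c; rewrite inE => /eqP ->; exists set0; rewrite sub0set sig0.
  - move=> c c'; rewrite !inE => /eqP -> /eqP ->; exists set0.
    by rewrite sub0set sig0 subrr; split=> //; left.
  - by rewrite cards0 cards1.
have [X0|] := eqVneq X set0.
  by apply: (IH X); rewrite X0 cards0.
case/set0Pn=> x Xx.
have HX' : (#|X :\ x| <= n)%N.
  by move: HX; rewrite (cardsD1 x X) Xx add1n ltnS.
have [C' [C'0 C'el C'diff C'card]] := IH _ HX'.
have subX : X :\ x \subset X by apply: subsetDl.
exists (sig X |: C'); split.
- by rewrite !inE C'0 orbT.
- move=> c; rewrite !inE => /orP[/eqP ->|Hc]; first by exists X.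
  by case: (C'el c Hc) => Y [YX ->]; exists Y; rewrite (subset_trans YX).
- have key : forall c, c \in C' -> exists W : {set I}, W \subset X /\ sig X - c = sig W.
    move=> c Hc; case: (C'el c Hc) => Y [YX ->].
    exists (X :\: Y); rewrite subsetDl; split=> //.
    by rewrite sig_setD // (subset_trans YX).
  move=> c c'; rewrite !inE => /orP[/eqP ->|Hc] /orP[/eqP ->|Hc'].
  + by exists set0; rewrite sub0set subrr sig0; split=> //; left.
  + by case: (key c' Hc') => W [WX E]; exists W; split=> //; left.
  + by case: (key c Hc) => W [WX E]; exists W; split=> //; right.
  + by case: (C'diff c c' Hc Hc') => W [WX E]; exists W; rewrite (subset_trans WX).
- move=> zsf.
  have zsf' : forall W : {set I}, W \subset X :\ x -> W != set0 -> sig W != 0.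
    by move=> W WX; apply: zsf; rewrite (subset_trans WX).
  have notin : sig X \notin C'.
    apply/negP=> Hin; case: (C'el _ Hin) => Y [YX EY].
    have := zsf (X :\: Y) (subsetDl _ _).
    rewrite sig_setD ?(subset_trans YX) // EY subrr eqxx => H.
    have : (X :\: Y) != set0.
      apply/set0Pn; exists x; rewrite inE Xx andbT.
      by apply/negP=> xY; move: (subsetP YX x xY); rewrite !inE eqxx.
    by move/H.
  rewrite cardsU1 notin (cardsD1 x X) Xx /= add1n ltnS.
  by apply: C'card.
Qed.

End Chain.

Section Main.
Variable I : finType.
Variable G : finZmodType.
Variable f : I -> G.
Variable h : G.
Hypothesis Hh : forall g : G, g != 0 -> exists n, g *+ n = h.
Hypothesis Hsig : forall V : {set I}, sig f V != h.

Local Notation sig := (sig f).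

Definition pm (J : {set I}) (g : G) :=
  exists V : {set I}, V \subset J /\ (g = sig V \/ g = - sig V).

Definition Fprops (J : {set I}) (F : seq {set I}) :=
  (forall B, B \in F -> [/\ B \subset J, B != set0 & sig B = 0]) /\
  (forall i j, (i < size F)%N -> (j < size F)%N -> i != j ->
      [disjoint nth set0 F i & nth set0 F j]).

Lemma main n : forall J : {set I}, (#|J| <= n)%N ->
  exists (F : seq {set I}) (D : {set G}),
    [/\ Fprops J F, 0 \in D,
        (forall d, d \in D -> exists V : {set I}, V \subset J /\ d = sig V),
        (forall d d', d \in D -> d' \in D -> pm J (d - d')) &
        (#|J| < #|D| + size F)%N].
Proof.
elim: n => [|n IH] J HJ.
  move: HJ; rewrite leqn0 cards_eq0 => /eqP ->.
  exists [::], [set 0]; split.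
  - by split=> // B.
  - by rewrite inE.
  - by move=> d; rewrite inE => /eqP ->; exists set0; rewrite sub0set sig0.
  - move=> d d'; rewrite !inE => /eqP -> /eqP ->; exists set0.
    by rewrite sub0set sig0 subrr; split=> //; left.
  - by rewrite cards0 cards1.
case: (boolP [exists W : {set I}, (W \subset J) && (W != set0) && (sig W == 0)]) => [Hex|Hnex].
- have exm : exists m, [exists W : {set I},
      [&& W \subset J, W != set0, sig W == 0 & #|W| == m]].
    case/existsP: Hex => W /andP[/andP[WJ Wn0] /eqP W0].
    by exists #|W|; apply/existsP; exists W; rewrite WJ Wn0 W0 !eqxx.
  case: (ex_minnP exm) => m /existsP[B /and4P[BJ Bn0 /eqP B0 /eqP Bm]] minm.
  case/set0Pn: (Bn0) => b Bb.
  pose X := B :\ b.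
  have XB : X \subset B by apply: subsetDl.
  have zsfX : forall W : {set I}, W \subset X -> W != set0 -> sig W != 0.
    move=> W WX Wn0; apply/negP => /eqP W0.
    have WJ : W \subset J by rewrite (subset_trans WX) // (subset_trans XB).
    have := minm #|W|; rewrite -Bm.
    have -> : [exists W0 : {set I}, [&& W0 \subset J, W0 != set0, sig W0 == 0 & #|W0| == #|W|]].
      by apply/existsP; exists W; rewrite WJ Wn0 W0 !eqxx.
    move=> /(_ isT); apply/negP; rewrite -ltnNge.
    apply: leq_ltn_trans (subset_leq_card WX) _.
    by rewrite /X (cardsD1 b B) Bb.
  have [C [C0 Cel Cdiff Ccard]] := chain f (leqnn #|X|).
  have cardC : (#|B| <= #|C|)%N.
    by have := Ccard zsfX; rewrite /X (cardsD1 b B) Bb add1n.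
  pose J' := J :\: B.
  have HJ' : (#|J'| <= n)%N.
    rewrite -ltnS; apply: leq_trans HJ.
    rewrite /J' cardsD (setIidPr BJ) ltn_subrL.
    by rewrite lt0n cards_eq0 Bn0 /= (leq_trans _ (subset_leq_card BJ)) // lt0n cards_eq0.
  have [F' [D' [[F'1 F'2] D'0 D'el D'diff D'card]]] := IH J' HJ'.
  have J'J : J' \subset J by apply: subsetDl.
  have disJ'B : forall V : {set I}, V \subset J' -> [disjoint V & B].
    move=> V VJ'; rewrite disjoint_subset; apply/subsetP=> i Vi.
    by move: (subsetP VJ' i Vi); rewrite !inE => /andP[].
  have Cboth : forall p1 p2, p1 \in C -> p2 \in C ->
      (exists W : {set I}, W \subset B /\ p1 - p2 = sig W) /\
      (exists W : {set I}, W \subset B /\ p1 - p2 = - sig W).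
    move=> p1 p2 H1 H2.
    have negB : forall W : {set I}, W \subset B -> - sig W = sig (B :\: W).
      by move=> W WB; rewrite sig_setD // B0 sub0r.
    case: (Cdiff p1 p2 H1 H2) => W [WX [E|E]]; have WB := subset_trans WX XB.
    + split; first by exists W.
      by exists (B :\: W); rewrite subsetDl -negB // opprK.
    + have E' : p1 - p2 = - sig W by rewrite -E opprB.
      split; last by exists W.
      by exists (B :\: W); rewrite subsetDl -negB.
  exists (B :: F'), (sumset D' C); split.
  + split.
    * move=> W; rewrite inE => /orP[/eqP ->|WF]; first by split.
      by case: (F'1 W WF) => WJ' Wn0 W0; split=> //; rewrite (subset_trans WJ').
    * move=> [|i] [|j] //= Hi Hj Hij.
      - have := (F'1 (nth set0 F' j) (mem_nth _ Hj)); case=> WJ' _ _.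
        by rewrite disjoint_sym; apply: disJ'B.
      - have := (F'1 (nth set0 F' i) (mem_nth _ Hi)); case=> WJ' _ _.
        by apply: disJ'B.
      - by apply: F'2.
  + by apply/imset2P; exists 0 0; rewrite ?addr0.
  + move=> d /imset2P[d1 p Hd1 Hp ->].
    case: (D'el d1 Hd1) => V [VJ' ->]; case: (Cel p Hp) => Y [YX ->].
    exists (V :|: Y); split.
      by rewrite subUset (subset_trans VJ') // (subset_trans YX) // (subset_trans XB).
    by rewrite sig_setU // (disjointWr (subset_trans YX XB)) // disJ'B.
  + move=> d d' /imset2P[d1 p1 Hd1 Hp1 ->] /imset2P[d2 p2 Hd2 Hp2 ->].
    have -> : d1 + p1 - (d2 + p2) = (d1 - d2) + (p1 - p2).
      by rewrite opprD addrACA.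
    case: (Cboth p1 p2 Hp1 Hp2) => [[W1 [W1B E1]] [W2 [W2B E2]]].
    case: (D'diff d1 d2 Hd1 Hd2) => V [VJ' [E|E]].
    * exists (V :|: W1); split.
        by rewrite subUset (subset_trans VJ') // (subset_trans W1B).
      by left; rewrite E E1 sig_setU // (disjointWr W1B) // disJ'B.
    * exists (V :|: W2); split.
        by rewrite subUset (subset_trans VJ') // (subset_trans W2B).
      by right; rewrite E E2 sig_setU // ?opprD // (disjointWr W2B) // disJ'B.
  + have Hns : h \notin sumset D' C.
      apply/negP => /imset2P[d1 p Hd1 Hp Eh].
      case: (D'el d1 Hd1) => V [VJ' EV]; case: (Cel p Hp) => Y [YX EY].
      move: (Hsig (V :|: Y)); rewrite sig_setU.
        by rewrite -EV -EY -Eh eqxx.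
      by rewrite (disjointWr (subset_trans YX XB)) // disJ'B.
    have := Klemma Hh (leqnn #|C|) D'0 C0 Hns.
    have cardJ : #|J| = (#|J'| + #|B|)%N.
      by rewrite /J' cardsD (setIidPr BJ) subnK // subset_leq_card.
    rewrite cardJ /= => HK.
    move: D'card cardC HK; move: #|J'| #|B| #|C| #|D'| #|sumset D' C| (size F') => a1 a2 a3 a4 a5 a6; lia.
- have zsfJ : forall W : {set I}, W \subset J -> W != set0 -> sig W != 0.
    move=> W WJ Wn0; apply/negP=> /eqP W0; move/negP: Hnex; apply.
    by apply/existsP; exists W; rewrite WJ Wn0 W0 eqxx.
  have [C [C0 Cel Cdiff Ccard]] := chain f (leqnn #|J|).
  exists [::], C; split=> //.
  + move=> d d' Hd Hd'; case: (Cdiff d d' Hd Hd') => W [WJ [E|E]]; exists W; split=> //.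
      by left.
    by right; rewrite -E opprB.
  + by rewrite addn0; apply: Ccard.
Qed.

End Main.

Section Final.
Variable k : nat.
Local Notation M := (2 ^ k.+1)%N.

Lemma M_gt1 : (1 < M)%N.
Proof. by rewrite -{1}(expn0 2) ltn_exp2l. Qed.

Lemma pow2k_ltM : (2 ^ k < M)%N.
Proof. by rewrite ltn_exp2l. Qed.

Definition hZ : 'Z_M := (2 ^ k)%:R.

Lemma hZ_add : hZ + hZ = 0.
Proof.
rewrite /hZ -natrD addnn -mul2n -expnS; apply: pchar_Zp; exact: M_gt1.
Qed.

Lemma hZ_opp : - hZ = hZ.
Proof. by apply/eqP; rewrite eq_sym -subr_eq0 opprK hZ_add. Qed.

Lemma odd_mul_pow (u : nat) : odd u -> ((u * 2 ^ k) %% M = 2 ^ k)%N.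
Proof.
move=> ou; rewrite -{1}(odd_double_half u) ou add1n -addn1 mulnDl mul1n.
by rewrite -muln2 -mulnA -expnS modnMDl modn_small // pow2k_ltM.
Qed.

Lemma Hh_Z : forall g : 'Z_M, g != 0 -> exists m, g *+ m = hZ.
Proof.
move=> g gn0.
have vpos : (0 < val g)%N by rewrite lt0n; apply: contra gn0 => /eqP H; apply/eqP/val_inj.
have vlt : (val g < M)%N.
  by have := ltn_ord g; rewrite [X in (_ < X)%N -> _]Zp_cast // M_gt1.
case: (pfactor_coprime (isT : prime 2) vpos) => u cu Ev.
set e := logn 2 (val g) in Ev.
have ek : (e <= k)%N.
  rewrite -ltnS -(ltn_exp2l _ _ (isT : (1 < 2)%N)).
  apply: leq_ltn_trans vlt; rewrite [X in (_ <= X)%N]Ev leq_pmull // lt0n.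
  by apply/negP => /eqP u0; move: vpos; rewrite Ev u0.
exists (2 ^ (k - e))%N.
rewrite -(natr_Zp g) -mulrnA /hZ; apply: val_inj.
rewrite /= !val_Zp_nat ?M_gt1 //.
rewrite Ev -mulnA -expnD subnKC // odd_mul_pow; last by rewrite -coprime2n.
by rewrite modn_small // pow2k_ltM.
Qed.

Lemma Mz_neq0 : (M : int) != 0.
Proof. by apply/negP => /eqP H; move: (M_gt1); rewrite -ltz_nat H. Qed.

Lemma intr_Z (z : int) : (z%:~R : 'Z_M) = (`|(z %% (M : int))%Z|%N)%:R.
Proof.
rewrite {1}(divz_eq z M) intrD intrM.
have -> : ((M : int)%:~R : 'Z_M) = 0.
  by rewrite [LHS](_ : _ = M%:R) //; apply: pchar_Zp; exact: M_gt1.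
rewrite mulr0 add0r.
have H0 : (0 <= (z %% (M : int))%Z)%R by apply: modz_ge0; exact: Mz_neq0.
by rewrite -{1}(gez0_abs H0).
Qed.

Lemma val_intr_Z (z : int) : nat_of_ord (z%:~R : 'Z_M) = `|(z %% (M : int))%Z|%N.
Proof.
rewrite intr_Z val_Zp_nat ?M_gt1 // modn_small //.
have H0 : (0 <= (z %% (M : int))%Z)%R by apply: modz_ge0; exact: Mz_neq0.
have := @ltz_pmod z M; rewrite ltz_nat expn_gt0 => /(_ isT). rewrite -{1}(gez0_abs H0).
by rewrite ltz_nat.
Qed.

Lemma intr_Z0 (z : int) : (z%:~R : 'Z_M) = 0 -> ((2%:Z) ^+ k.+1 %| z)%Z.
Proof.
move=> /(congr1 (@nat_of_ord _)); rewrite val_intr_Z /= => /eqP.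
rewrite absz_eq0 => /eqP H.
have -> : (2%:Z) ^+ k.+1 = (M : int) by rewrite -[RHS]natz natrX natz.
by apply/dvdz_mod0P.
Qed.

Lemma intr_Zh (z : int) : (z%:~R : 'Z_M) = hZ ->
  ((2%:Z) ^+ k %| z)%Z && ~~ ((2%:Z) ^+ k.+1 %| z)%Z.
Proof.
move=> /(congr1 (@nat_of_ord _)); rewrite val_intr_Z /hZ val_Zp_nat ?M_gt1 // modn_small ?pow2k_ltM //.
move=> H.
have H0 : (0 <= (z %% (M : int))%Z)%R by apply: modz_ge0; exact: Mz_neq0.
have Er : (z %% (M : int))%Z = (2 ^ k)%N by rewrite -(gez0_abs H0) H.
have E1 : (2%:Z) ^+ k = (2 ^ k)%N by rewrite -[RHS]natz natrX natz.
have E2 : (2%:Z) ^+ k.+1 = (M : int) by rewrite -[RHS]natz natrX natz.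
rewrite E1 E2; apply/andP; split.
  apply/dvdzP; exists ((z %/ (M : int))%Z * 2 + 1).
  rewrite {1}(divz_eq z M) Er expnS PoszM.
  ring.
apply/negP => /dvdz_mod0P; rewrite Er => Hz.
by move: (expn_gt0 2 k); rewrite -ltz_nat Hz ltxx.
Qed.

End Final.

Lemma sig_intr (k : nat) (I : finType) (a : I -> int) (V : {set I}) :
  sig (fun i => ((a i)%:~R : 'Z_(2 ^ k.+1))) V = (\sum_(i in V) a i)%:~R.
Proof.
rewrite /sig; elim/big_rec2: _ => [|i y1 y2 _ ->]; first by [].
by rewrite intrD.
Qed.

Unset Implicit Arguments.

(* Indices {1,...,2^k+x} are represented by 'I_(2^k + x) = {0,...,2^k+x-1}. *)
Theorem lemma1p11 (k x : nat) (hk : (1 <= k)%N) (a : 'I_(2 ^ k + x) -> int) :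
  (exists I : {set 'I_(2 ^ k + x)},
      ((2%:Z) ^+ k %| \sum_(i in I) a i)%Z /\ ~~ ((2%:Z) ^+ k.+1 %| \sum_(i in I) a i)%Z)
  \/
  (exists A : 'I_x.+1 -> {set 'I_(2 ^ k + x)},
      (forall s, A s != set0) /\
      (forall s t, s != t -> [disjoint A s & A t]) /\
      (forall s, ((2%:Z) ^+ k.+1 %| \sum_(i in A s) a i)%Z)).
Proof.
case: (boolP [exists I : {set 'I_(2 ^ k + x)},
   ((2%:Z) ^+ k %| \sum_(i in I) a i)%Z && ~~ ((2%:Z) ^+ k.+1 %| \sum_(i in I) a i)%Z])
   => [/existsP[I /andP[H1 H2]]|Hno].
  by left; exists I.
right.
pose f := fun i => ((a i)%:~R : 'Z_(2 ^ k.+1)).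
have Hsig : forall V, sig f V != hZ k.
  move=> V; apply/negP => /eqP E; move/negP: Hno; apply; apply/existsP; exists V.
  by apply: intr_Zh; rewrite -sig_intr.
have [F [D [[F1 F2] D0 Del Ddiff Dcard]]] :=
  main (@Hh_Z k) Hsig (leqnn #|[set: 'I_(2 ^ k + x)]|).
have Dle : (#|D| <= 2 ^ k)%N.
  have Hd : forall d d', d \in D -> d' \in D -> d - d' != hZ k.
    move=> d d' Hd Hd'; case: (Ddiff d d' Hd Hd') => V [_ [E|E]]; rewrite E //.
    by rewrite -(hZ_opp k) eqr_opp.
  pose Dh := [set d + hZ k | d in D].
  have cDh : #|Dh| = #|D| by rewrite card_imset //; apply: addIr.
  have disj : D :&: Dh = set0.
    apply/setP=> y; rewrite !inE; apply/negP=> /andP[Hy /imsetP[d Hd0 Ey]].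
    by move: (Hd y d Hy Hd0); rewrite Ey addrAC subrr add0r eqxx.
  have Hc : (#|D :|: Dh| <= 2 ^ k.+1)%N.
    by apply: leq_trans (max_card _) _; rewrite card_ord Zp_cast // M_gt1.
  move: Hc; rewrite cardsU disj cards0 subn0 cDh; move: #|D| => c.
  rewrite expnS; move: (2 ^ k)%N => t; lia.
have sizeF : (x < size F)%N.
  move: Dcard Dle; rewrite cardsT card_ord.
  move: #|D| (size F) => d s; lia.
exists (fun s : 'I_x.+1 => nth set0 F s); split; [|split].
- move=> s; have Hs : (s < size F)%N by apply: leq_trans (ltn_ord s) sizeF.
  by case: (F1 _ (mem_nth set0 Hs)).
- move=> s t st; apply: F2.
  + by apply: leq_trans (ltn_ord s) sizeF.
  + by apply: leq_trans (ltn_ord t) sizeF.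
  + exact: st.
- move=> s; have Hs : (s < size F)%N by apply: leq_trans (ltn_ord s) sizeF.
  case: (F1 _ (mem_nth set0 Hs)) => _ _ E.
  by apply: intr_Z0; rewrite -sig_intr.
Qed.
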